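(* Let $H$ be an abelian subgroup of $\operatorname{Sym}_n$ and let $S=S_n(H)$. Then $S$ is cancellative if and only if $H_1=H_n=\{\mathrm{id}\}$.
   Context: For a subset $H\subseteq \operatorname{Sym}_n$, $S_n(H)$ denotes the monoid with presentation $\langle a_1,\dots,a_n \mid a_1a_2\cdots a_n = a_{\sigma(1)}a_{\sigma(2)}\cdots a_{\sigma(n)},\ \sigma\in H\rangle$. For a subgroup $H$ of $\operatorname{Sym}_n$ and $1\leq i\leq n$, $H_i=\{\sigma\in H\mid \sigma(i)=i\}$ is the stabilizer of $i$ in $H$; $\mathrm{id}$ is the identity permutation. A monoid is cancellative if it is both left and right cancellative. *)

(* Defs.v *)
From HB Require Import structures.
From mathcomp Require Import all_boot all_order all_fingroup.
Set Implicit Arguments. Unset Strict Implicit. Unset Printing Implicit Defensive.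

(* Generators a_1..a_n are the elements of 'I_n (a_{i+1} <-> i : 'I_n).
   Words in the free monoid are sequences of generators. *)

Definition base_word (n : nat) : seq 'I_n := enum 'I_n.

Definition perm_word (n : nat) (s : {perm 'I_n}) : seq 'I_n :=
  map s (base_word n).

(* Two words are equal in
   S_n(H) iff they are related by Scong. *)
Inductive Scong (n : nat) (H : {set {perm 'I_n}}) : seq 'I_n -> seq 'I_n -> Prop :=
| Scong_refl w : Scong H w w
| Scong_step u v s : s \in H ->
    Scong H (u ++ base_word n ++ v) (u ++ perm_word s ++ v)
| Scong_sym w1 w2 : Scong H w1 w2 -> Scong H w2 w1
| Scong_trans w1 w2 w3 : Scong H w1 w2 -> Scong H w2 w3 -> Scong H w1 w3.

Definition Sn_cancellative (n : nat) (H : {set {perm 'I_n}}) : Prop :=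
  (forall x y z : seq 'I_n, Scong H (x ++ y) (x ++ z) -> Scong H y z) /\
  (forall x y z : seq 'I_n, Scong H (y ++ x) (z ++ x) -> Scong H y z).

Definition stab (n : nat) (H : {set {perm 'I_n}}) (i : 'I_n) : {set {perm 'I_n}} :=
  [set s in H | s i == i].

(* Main.v *)
Require Import Defs.
From mathcomp Require Import all_boot all_order all_fingroup.
Set Implicit Arguments. Unset Strict Implicit.

Inductive C (T : Type) (W : seq T -> Prop) : seq T -> seq T -> Prop :=
| C_refl x : C W x x
| C_step u v w w' : W w -> W w' -> C W (u ++ w ++ v) (u ++ w' ++ v)
| C_trans x y z : C W x y -> C W y z -> C W x z.

Lemma C_sym T (W : seq T -> Prop) x y : C W x y -> C W y x.
Proof.
elim=> [x0|u v w w' Hw Hw'|x0 y0 z0 _ H1 _ H2]; first exact: C_refl.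
  exact: C_step. exact: C_trans H2 H1.
Qed.

Lemma C_size T (W : seq T -> Prop)
  (hs : forall w w', W w -> W w' -> size w = size w') x y :
  C W x y -> size x = size y.
Proof.
elim=> [//|u v w w' Hw Hw'|x0 y0 z0 _ H1 _ H2]; last by rewrite H1.
by rewrite !size_cat (hs _ _ Hw Hw').
Qed.

Lemma C_catl T (W : seq T -> Prop) l x y : C W x y -> C W (l ++ x) (l ++ y).
Proof.
elim=> [x0|u v w w' Hw Hw'|x0 y0 z0 _ H1 _ H2]; first exact: C_refl.
  by have := C_step (l ++ u) v Hw Hw'; rewrite -!catA.
exact: C_trans H1 H2.
Qed.

Lemma C_rev T (W : seq T -> Prop) x y :
  C W x y -> C (fun w => W (rev w)) (rev x) (rev y).
Proof.
elim=> [x0|u v w w' Hw Hw'|x0 y0 z0 _ H1 _ H2]; first exact: C_refl.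
  have Hw1 : W (rev (rev w)) by rewrite revK.
  have Hw2 : W (rev (rev w')) by rewrite revK.
  have := @C_step _ (fun w => W (rev w)) (rev v) (rev u) _ _ Hw1 Hw2.
  by rewrite !rev_cat !catA.
exact: C_trans H1 H2.
Qed.

Lemma C_mono T (W1 W2 : seq T -> Prop) x y :
  (forall w, W1 w -> W2 w) -> C W1 x y -> C W2 x y.
Proof.
move=> hW; elim=> [x0|u v w w' Hw Hw'|x0 y0 z0 _ H1 _ H2]; first exact: C_refl.
  by apply: C_step; apply: hW.
exact: C_trans H1 H2.
Qed.

Definition LC T (W : seq T -> Prop) k := forall l q r : seq T,
  size (l ++ q) <= k -> C W (l ++ q) (l ++ r) -> C W q r.

Lemma keyQ T (W : seq T -> Prop)
  (hs : forall w w', W w -> W w' -> size w = size w')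
  (hh : forall a l b m, W (a :: l) -> W (b :: m) -> a = b -> l = m)
  k (IHk : LC W k) x y :
  C W x y -> size x <= k.+1 -> forall a y' b z', x = a :: y' -> y = b :: z' ->
  (a = b /\ C W y' z') \/
  (exists l l' t, W (a :: l) /\ W (b :: l') /\ C W y' (l ++ t) /\ C W z' (l' ++ t)).
Proof.
elim=> {x y} [x | u v w w' Hw Hw' | x m y Hxm IH1 Hmy IH2] Hsz a y' b z' Ex Ey.
- rewrite Ex in Ey; case: Ey => <- <-; left; split=> //; exact: C_refl.
- clear Hsz; case: u Ex Ey => [|d u] /= Ex Ey.
  + case: w Hw Ex => [|c l] Hw Ex.
      have := hs _ _ Hw Hw'; case: w' Hw' Ey => // _ Ey _.
      rewrite /= in Ex Ey; rewrite Ex in Ey; case: Ey => <- <-; left; split=> //; exact: C_refl.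
    case: w' Hw' Ey => [|c' l'] Hw' Ey; first by have := hs _ _ Hw Hw'.
    case: Ex => Ea Ey'; case: Ey => Eb Ez'; subst.
    right; exists l, l', v; do 3 (split => //); exact: C_refl.
  + case: Ex => Ea Ey'; case: Ey => Eb Ez'; subst.
    left; split => //; exact: C_step.
- have Hs1 := C_size hs Hxm.
  case: m Hxm IH1 Hmy IH2 Hs1 => [|c m'] Hxm IH1 Hmy IH2 Hs1; first by rewrite Ex in Hs1.
  have Q1 := IH1 Hsz a y' c m' Ex erefl.
  have Hsm : size (c :: m') <= k.+1 by rewrite -Hs1.
  have Q2 := IH2 Hsm c m' b z' erefl Ey.
  case: Q1 => [[Eac H1] | [l1 [l2 [t [W1 [W2 [H1 H2]]]]]]];
  case: Q2 => [[Ecb H3] | [l3 [l4 [t' [W3 [W4 [H3 H4]]]]]]].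
  + left; split; [by rewrite Eac | exact: C_trans H1 H3].
  + right; exists l3, l4, t'; rewrite Eac; do 2 (split => //); split => //.
    exact: C_trans H1 H3.
  + right; exists l1, l2, t; rewrite -Ecb; do 3 (split => //).
    exact: C_trans (C_sym H3) H2.
  + have El := hh _ _ _ _ W2 W3 erefl; subst l3.
    have Ht : C W t t'.
      apply: (IHk l2).
        rewrite -(C_size hs H2); move: Hsz Hs1; rewrite Ex /= => Hsz [<-]; exact: Hsz.
      exact: C_trans (C_sym H2) H3.
    right; exists l1, l4, t; do 3 (split => //).
    exact: C_trans H4 (C_catl l4 (C_sym Ht)).
Qed.

Lemma LC_all T (W : seq T -> Prop)
  (hs : forall w w', W w -> W w' -> size w = size w')
  (hh : forall a l b m, W (a :: l) -> W (b :: m) -> a = b -> l = m) k : LC W k.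
Proof.
elim: k => [|k IHk] [|c l] q r //=.
move=> Hs HC.
have := keyQ hs hh IHk HC Hs erefl erefl.
case=> [[_ H] | [l1 [l2 [t [W1 [W2 [H1 H2]]]]]]]; apply: (IHk l) => //.
have El := hh _ _ _ _ W1 W2 erefl; subst l2.
exact: C_trans H1 (C_sym H2).
Qed.

Lemma C_cancel T (W : seq T -> Prop)
  (hs : forall w w', W w -> W w' -> size w = size w')
  (hh : forall a l b m, W (a :: l) -> W (b :: m) -> a = b -> l = m) l q r :
  C W (l ++ q) (l ++ r) -> C W q r.
Proof. exact: (LC_all hs hh (leqnn _)). Qed.

Definition PW N (H : {set {perm 'I_N}}) (w : seq 'I_N) : Prop :=
  exists2 s, s \in H & w = perm_word s.

Lemma base_perm1 N : base_word N = perm_word (1%g : {perm 'I_N}).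
Proof. by rewrite /perm_word (eq_map (@perm1 _)) map_id. Qed.

Lemma Scong_C N (H : {group {perm 'I_N}}) x y : Scong H x y -> C (PW H) x y.
Proof.
elim=> [w|u v s Hs|w1 w2 _ IH|w1 w2 w3 _ H1 _ H2].
- exact: C_refl.
- apply: C_step; [exists 1%g; [exact: group1|exact: base_perm1] | by exists s].
- exact: C_sym.
- exact: C_trans H1 H2.
Qed.

Lemma C_Scong N (H : {group {perm 'I_N}}) x y : C (PW H) x y -> Scong H x y.
Proof.
elim=> [w|u v w w' [s Hs ->] [s' Hs' ->]|w1 w2 w3 _ H1 _ H2].
- exact: Scong_refl.
- apply: Scong_trans (Scong_step u v Hs').
  exact: Scong_sym (Scong_step u v Hs).
- exact: Scong_trans H1 H2.
Qed.

Lemma size_pw N (s : {perm 'I_N}) : size (perm_word s) = N.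
Proof. by rewrite size_map size_enum_ord. Qed.

Lemma PW_size N (H : {set {perm 'I_N}}) w w' : PW H w -> PW H w' -> size w = size w'.
Proof. by case=> s _ -> [s' _ ->]; rewrite !size_pw. Qed.

Lemma revPW_size N (H : {set {perm 'I_N}}) w w' :
  PW H (rev w) -> PW H (rev w') -> size w = size w'.
Proof. by move=> h1 h2; rewrite -size_rev -(size_rev w'); apply: PW_size h1 h2. Qed.

Lemma stab_inj n (H : {group {perm 'I_n.+1}}) i s s' :
  stab H i = 1%g -> s \in H -> s' \in H -> s i = s' i -> s = s'.
Proof.
move=> hst Hs Hs' E.
have : (s' * s^-1)%g \in stab H i.
  by rewrite inE groupM ?groupV //= permM -E permK.
rewrite hst in_set1 => /eqP E2.
by apply: (mulIg s^-1%g); rewrite E2 mulgV.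
Qed.

Lemma head_pw n (s : {perm 'I_n.+1}) a l : perm_word s = a :: l -> a = s ord0.
Proof.
move=> E; have := congr1 (fun w => nth ord0 w 0) E.
rewrite /= /perm_word /base_word (nth_map ord0) ?size_enum_ord //.
by have := nth_ord_enum ord0 (ord0 : 'I_n.+1) => /= ->.
Qed.

Lemma last_pw n (s : {perm 'I_n.+1}) a l : perm_word s = rcons l a -> a = s ord_max.
Proof.
move=> E; have Hl : size l = n by have := congr1 size E; rewrite size_pw size_rcons => -[].
have := congr1 (fun w => nth ord0 w n) E.
rewrite /= nth_rcons Hl ltnn eqxx /perm_word /base_word (nth_map ord0) ?size_enum_ord //.
by have := nth_ord_enum ord0 (ord_max : 'I_n.+1) => /= ->.
Qed.

Lemma PW_head n (H : {group {perm 'I_n.+1}}) : stab H ord0 = 1%g ->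
  forall a l b m, PW H (a :: l) -> PW H (b :: m) -> a = b -> l = m.
Proof.
move=> hst a l b m [s Hs E] [s' Hs' E'] Eab.
have E1 := head_pw (esym E); have E2 := head_pw (esym E').
have ess : s = s' by apply: (stab_inj hst Hs Hs'); rewrite -E1 -E2.
by move: E E'; rewrite ess => <- [_ ->].
Qed.

Lemma PW_last n (H : {group {perm 'I_n.+1}}) : stab H ord_max = 1%g ->
  forall a l b m, PW H (rev (a :: l)) -> PW H (rev (b :: m)) -> a = b -> l = m.
Proof.
move=> hst a l b m [s Hs E] [s' Hs' E'] Eab; rewrite !rev_cons in E E'.
have E1 := last_pw (esym E); have E2 := last_pw (esym E').
have ess : s = s' by apply: (stab_inj hst Hs Hs'); rewrite -E1 -E2.
move: E E'; rewrite ess => <- /rcons_inj [] /(congr1 rev).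
by rewrite !revK.
Qed.

Lemma short_C N (H : {set {perm 'I_N}}) x y : C (PW H) x y -> size x < N -> x = y.
Proof.
elim=> [//|u v w w' [s _ ->] _|w1 w2 w3 H12 IH1 H23 IH2] Hsz.
  by move: Hsz; rewrite !size_cat size_pw addnCA ltnNge leq_addr.
have E := IH1 Hsz; subst w2; exact: IH2.
Qed.

Lemma enum_cons n : exists l, enum 'I_n.+1 = ord0 :: l.
Proof.
case E: (enum 'I_n.+1) => [|a l]; first by have := size_enum_ord n.+1; rewrite E.
exists l; have := nth_ord_enum ord0 (ord0 : 'I_n.+1); rewrite E /= => ->. done.
Qed.

Lemma enum_rcons n : exists l, enum 'I_n.+1 = rcons l ord_max.
Proof.
case/lastP E: (enum 'I_n.+1) => [|l a]; first by have := size_enum_ord n.+1; rewrite E.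
exists l; have Hl : size l = n by have := size_enum_ord n.+1; rewrite E size_rcons => -[].
have := nth_ord_enum ord0 (ord_max : 'I_n.+1); rewrite E /= nth_rcons Hl ltnn eqxx => ->.
done.
Qed.

Lemma map_id_perm n (s : {perm 'I_n.+1}) : map s (enum 'I_n.+1) = enum 'I_n.+1 -> s = 1%g.
Proof.
move=> E; apply/permP => x; rewrite perm1.
have := congr1 (fun w => nth ord0 w x) E.
by rewrite /= (nth_map ord0) ?size_enum_ord // !nth_ord_enum.
Qed.

Theorem theorem3p1 (n : nat) (H : {group {perm 'I_n.+1}}) :
  abelian H ->
  (Sn_cancellative H <->
   (stab H ord0 = 1%g /\ stab H ord_max = 1%g)).
Proof.
move=> _; split.
- case=> [hL hR]; split; apply/setP => s; rewrite !inE.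
  + apply/andP/eqP => [[Hs /eqP E]|->]; last by rewrite group1 perm1 eqxx.
    have := Scong_step [::] [::] Hs; rewrite /= !cats0 /perm_word /base_word.
    have [l El] := enum_cons n; rewrite El /= E => /(hL [:: ord0]) /Scong_C Hc.
    have Hl : size l < n.+1.
      by have := size_enum_ord n.+1; rewrite El /= => -[->].
    have Em := short_C Hc Hl.
    by apply: map_id_perm; rewrite El /= E -Em.
  + apply/andP/eqP => [[Hs /eqP E]|->]; last by rewrite group1 perm1 eqxx.
    have := Scong_step [::] [::] Hs; rewrite /= !cats0 /perm_word /base_word.
    have [l El] := enum_rcons n; rewrite El map_rcons E -!cats1.
    move=> /(hR [:: ord_max]) /Scong_C Hc.
    have Hl : size l < n.+1.
      by have := size_enum_ord n.+1; rewrite El size_rcons => -[->].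
    have Em := short_C Hc Hl.
    by apply: map_id_perm; rewrite El map_rcons E -Em.
- case=> [h0 hm]; split.
  + move=> x y z /Scong_C Hc; apply: C_Scong.
    exact: (C_cancel (@PW_size _ H) (PW_head h0) Hc).
  + move=> x y z /Scong_C /C_rev; rewrite !rev_cat => Hc.
    have := C_cancel (@revPW_size _ H) (PW_last hm) Hc.
    move=> /C_rev; rewrite !revK => Hc2; apply: C_Scong.
    by apply: C_mono Hc2 => w; rewrite revK.
Qed.
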